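(* Let $\mathcal R$ be a CCTRS. (1) If $s,t\in\mathcal T(\mathcal F,\mathcal V)$ and $s\sqsupset t$, then $\mathrm{label}(s)\rightharpoonup_\rhd\mathrm{label}(t)$. (2) If $s,t\in\mathcal T(\mathcal G,\mathcal V)$ and $s\rightharpoonup_\rhd t$, then $\mathrm{erase}(s)\sqsupset\mathrm{erase}(t)$.
   Context: Terms are built from a signature $\mathcal F$ and variables $\mathcal V$. An (oriented) conditional rewrite rule has the form $\ell\to r\Leftarrow a_1\approx b_1,\dots,a_k\approx b_k$ with $k\ge0$; $s\to_{\mathcal R}t$ iff there are a position $p$, a rule and a substitution $\sigma$ with $s|_p=\ell\sigma$, $t=s[r\sigma]_p$ and $a_j\sigma\to_{\mathcal R}^*b_j\sigma$ for all $j$ (formally the union of the usual approximations $\to_{\mathcal R_i}$). Defined symbols are root symbols of left-hand sides, others are constructors; constructor terms contain only constructors and variables. $\mathcal R{\restriction}f$ is the set of rules whose left-hand side has root $f$. A CCTRS is a set $\mathcal R$ of rules each of the form $f(\ell_1,\dots,\ell_n)\to r\Leftarrow a_1\approx b_1,\dots,a_k\approx b_k$ where $\ell_1,\dots,\ell_n,b_1,\dots,b_k$ are constructor terms, the terms $f(\ell_1,\dots,\ell_n),b_1,\dots,b_k$ pairwise have no common variables, $\mathrm{Var}(r)\subseteq\mathrm{Var}(\ell_1,\dots,\ell_n,b_1,\dots,b_k)$ and $\mathrm{Var}(a_i)\subseteq\mathrm{Var}(\ell_1,\dots,\ell_n,b_1,\dots,b_{i-1})$. Write $s\sqsupset t$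 (for unlabeled terms) if there are a position $p$, a rule $\ell\to r\Leftarrow a_1\approx b_1,\dots,a_k\approx b_k$, a substitution $\sigma$ and $1\le i\le k$ with $s|_p=\ell\sigma$, $a_j\sigma\to^* b_j\sigma$ for $1\le j<i$, and $t=a_i\sigma$. Labeled terms: the labeled signature $\mathcal G$ consists of the constructors of $\mathcal F$ together with a symbol $f_R$ (same arity as $f$) for every defined $f$ and every $R\subseteq\mathcal R{\restriction}f$. $\mathrm{label}(t)$ replaces every defined $f$ by $f_{\mathcal R\restriction f}$; $\mathrm{erase}$ removes all labels. A labeled normal form is a term built only from constructors, symbols $f_\emptyset$, and variables. The labeled step relation $\rightharpoonup$ is defined inductively: $s\rightharpoonup t$ if either (i) there are a position $p$ and a rule $\rho\colon\ell\to r\Leftarrow c$ with $s|_p=f_R(s_1,\dots,s_n)$, $\rho\in R$, $t=s[f_{R\setminus\{\rho\}}(s_1,\dots,s_n)]_p$, and linear labeled normal forms $u_1,\dots,u_n$ on fresh variables and $\sigma$ with $s|_p=f_R(u_1,\dots,u_n)\sigma$ and $f(\mathrm{erase}(u_1),\dots,\mathrm{erase}(u_n))$ not unifiable with $\ell$; or (ii) there are $p$, a rule $\rho\colon f(\ell_1,\dots,\ell_n)\to r\Leftarrow a_1\approx b_1,\dots,a_k\approx b_k$, $\sigma$ and $0\le j\le k$ with $s|_p=f_R(\ell_1\sigma,\dots,\ell_n\sigma)$, $\rho\in R$, $\mathrm{label}(a_i)\sigma\rightharpoonup^*b_i\sigma$ for $1\le i\le j$, and either $j=k$ and $t=s[\mathrm{label}(r)\sigma]_p$,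 or $j<k$, $\mathrm{label}(a_{j+1})\sigma\rightharpoonup^*u\tau$ for some linear labeled normal form $u$ with $\mathrm{erase}(u)$ not unifiable with $b_{j+1}$ and some $\tau$, and $t=s[f_{R\setminus\{\rho\}}(\ell_1\sigma,\dots,\ell_n\sigma)]_p$. Finally $s\rightharpoonup_\rhd t$ if there are a position $p$, a rule $\rho$ as in (ii), a substitution $\sigma$ and $0\le j<k$ with $s|_p=f_R(\ell_1\sigma,\dots,\ell_n\sigma)$, $\rho\in R$, $\mathrm{label}(a_i)\sigma\rightharpoonup^*b_i\sigma$ for $1\le i\le j$, and $t=\mathrm{label}(a_{j+1})\sigma$. *)

(* Defs.v *)
From Stdlib Require Import List Arith ClassicalEpsilon.
Import ListNotations.
Set Implicit Arguments.

Inductive term (F : Type) : Type :=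
| Var (x : nat)
| Fun (f : F) (ts : list (term F)).
Arguments Var {F} x.
Arguments Fun {F} f ts.

Fixpoint subst {F : Type} (sg : nat -> term F) (t : term F) : term F :=
  match t with
  | Var x => sg x
  | Fun f ts => Fun f (map (subst sg) ts)
  end.

Fixpoint vars {F : Type} (t : term F) : list nat :=
  match t with
  | Var x => [x]
  | Fun _ ts => flat_map vars ts
  end.

Fixpoint funs {F : Type} (t : term F) : list F :=
  match t with
  | Var _ => []
  | Fun f ts => f :: flat_map funs ts
  end.

Inductive ctx (F : Type) : Type :=
| Hole
| CFun (f : F) (l : list (term F)) (C : ctx F) (r : list (term F)).
Arguments Hole {F}.

Fixpoint fill {F : Type} (C : ctx F) (t : term F) : term F :=
  match C with
  | Hole => t
  | CFun f l C' r => Fun f (l ++ fill C' t :: r)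
  end.

Definition unifiable {F : Type} (s t : term F) : Prop :=
  exists th : nat -> term F, subst th s = subst th t.

Record rule (F : Type) : Type := mkRule {
  lhs : term F;
  rhs : term F;
  conds : list (term F * term F) }.

Definition rule_vars {F : Type} (rho : rule F) : list nat :=
  vars (lhs rho) ++ vars (rhs rho) ++
  flat_map (fun c => vars (fst c) ++ vars (snd c)) (conds rho).

Definition trs (F : Type) := rule F -> Prop.

Definition root_is {F : Type} (f : F) (t : term F) : Prop :=
  exists ts, t = Fun f ts.

Definition defined {F : Type} (R : trs F) (f : F) : Prop :=
  exists rho, R rho /\ root_is f (lhs rho).

Definition constructor_term {F : Type} (R : trs F) (t : term F) : Prop :=
  forall g, In g (funs t) -> ~ defined R g.

Definition disjoint (l1 l2 : list nat) : Prop :=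
  forall x, In x l1 -> In x l2 -> False.

Definition CCTRS {F : Type} (R : trs F) : Prop :=
  forall rho, R rho ->
    exists f ls, lhs rho = Fun f ls /\
      Forall (constructor_term R) ls /\
      Forall (fun c => constructor_term R (snd c)) (conds rho) /\
      (let L := lhs rho :: map snd (conds rho) in
       forall i j, i < length L -> j < length L -> i <> j ->
         disjoint (vars (nth i L (Var 0))) (vars (nth j L (Var 0)))) /\
      incl (vars (rhs rho)) (vars (lhs rho) ++ flat_map (fun c => vars (snd c)) (conds rho)) /\
      (forall i, i < length (conds rho) ->
         incl (vars (fst (nth i (conds rho) (Var 0, Var 0))))
              (vars (lhs rho) ++ flat_map (fun c => vars (snd c)) (firstn i (conds rho)))).

(* ---------- conditional rewriting (least fixed point = union of the R_i) ---------- *)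
Inductive rstep {F : Type} (R : trs F) : term F -> term F -> Prop :=
| RStep (C : ctx F) (rho : rule F) (sg : nat -> term F) :
    R rho ->
    (forall c, In c (conds rho) -> rsteps R (subst sg (fst c)) (subst sg (snd c))) ->
    rstep R (fill C (subst sg (lhs rho))) (fill C (subst sg (rhs rho)))
with rsteps {F : Type} (R : trs F) : term F -> term F -> Prop :=
| RRefl s : rsteps R s s
| RTrans s t u : rstep R s t -> rsteps R t u -> rsteps R s u.

Definition cnth {F : Type} (rho : rule F) (i : nat) : term F * term F :=
  nth i (conds rho) (Var 0, Var 0).

(* s ⊐ t  (i is 0-based: t = a_{i+1} sigma) *)
Definition sqsup {F : Type} (R : trs F) (s t : term F) : Prop :=
  exists (C : ctx F) (rho : rule F) (sg : nat -> term F) (i : nat),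
    R rho /\ s = fill C (subst sg (lhs rho)) /\ i < length (conds rho) /\
    (forall j, j < i -> rsteps R (subst sg (fst (cnth rho j))) (subst sg (snd (cnth rho j)))) /\
    t = subst sg (fst (cnth rho i)).

(* LCon f ts : a constructor f (unlabeled);  LDef f L ts : the labeled symbol f_L,
   where the label L is a set of rules. *)
Inductive lterm (F : Type) : Type :=
| LVar (x : nat)
| LCon (f : F) (ts : list (lterm F))
| LDef (f : F) (L : rule F -> Prop) (ts : list (lterm F)).
Arguments LVar {F} x.
Arguments LCon {F} f ts.
Arguments LDef {F} f L ts.

Definition rules_of {F : Type} (R : trs F) (f : F) : rule F -> Prop :=
  fun rho => R rho /\ root_is f (lhs rho).

Definition remove_rule {F : Type} (L : rule F -> Prop) (rho : rule F) : rule F -> Prop :=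
  fun rho' => L rho' /\ rho' <> rho.

Fixpoint label {F : Type} (R : trs F) (t : term F) : lterm F :=
  match t with
  | Var x => LVar x
  | Fun f ts =>
      if excluded_middle_informative (defined R f)
      then LDef f (rules_of R f) (map (label R) ts)
      else LCon f (map (label R) ts)
  end.

Fixpoint erase {F : Type} (t : lterm F) : term F :=
  match t with
  | LVar x => Var x
  | LCon f ts => Fun f (map erase ts)
  | LDef f _ ts => Fun f (map erase ts)
  end.

Fixpoint lsubst {F : Type} (sg : nat -> lterm F) (t : lterm F) : lterm F :=
  match t with
  | LVar x => sg x
  | LCon f ts => LCon f (map (lsubst sg) ts)
  | LDef f L ts => LDef f L (map (lsubst sg) ts)
  end.

Fixpoint lvars {F : Type} (t : lterm F) : list nat :=
  match t with
  | LVar x => [x]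
  | LCon _ ts => flat_map lvars ts
  | LDef _ _ ts => flat_map lvars ts
  end.

(* membership in T(G,V) *)
Inductive lwf {F : Type} (R : trs F) : lterm F -> Prop :=
| LwfVar x : lwf R (LVar x)
| LwfCon f ts : ~ defined R f -> Forall (lwf R) ts -> lwf R (LCon f ts)
| LwfDef f L ts : defined R f -> (forall rho, L rho -> rules_of R f rho) ->
    Forall (lwf R) ts -> lwf R (LDef f L ts).

Definition lwf_subst {F : Type} (R : trs F) (sg : nat -> lterm F) : Prop :=
  forall x, lwf R (sg x).

Inductive lnf {F : Type} (R : trs F) : lterm F -> Prop :=
| LnfVar x : lnf R (LVar x)
| LnfCon f ts : ~ defined R f -> Forall (lnf R) ts -> lnf R (LCon f ts)
| LnfDef f L ts : defined R f -> (forall rho, ~ L rho) ->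
    Forall (lnf R) ts -> lnf R (LDef f L ts).

Definition lin_lnf_fresh {F : Type} (R : trs F) (us : list (lterm F)) (rho : rule F) : Prop :=
  Forall (lnf R) us /\ NoDup (flat_map lvars us) /\
  disjoint (flat_map lvars us) (rule_vars rho).

Inductive lctx (F : Type) : Type :=
| LHole
| LCCon (f : F) (l : list (lterm F)) (C : lctx F) (r : list (lterm F))
| LCDef (f : F) (L : rule F -> Prop) (l : list (lterm F)) (C : lctx F) (r : list (lterm F)).
Arguments LHole {F}.

Fixpoint lfill {F : Type} (C : lctx F) (t : lterm F) : lterm F :=
  match C with
  | LHole => t
  | LCCon f l C' r => LCon f (l ++ lfill C' t :: r)
  | LCDef f L l C' r => LDef f L (l ++ lfill C' t :: r)
  end.

Definition lapp {F : Type} (R : trs F) (sg : nat -> lterm F) (t : term F) : lterm F :=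
  lsubst sg (label R t).

Inductive lstep {F : Type} (R : trs F) : lterm F -> lterm F -> Prop :=
| LStepSkip (C : lctx F) (f : F) (L : rule F -> Prop) (rho : rule F)
    (us : list (lterm F)) (sg : nat -> lterm F) :
    L rho -> lin_lnf_fresh R us rho -> lwf_subst R sg ->
    ~ unifiable (Fun f (map erase us)) (lhs rho) ->
    lstep R (lfill C (LDef f L (map (lsubst sg) us)))
            (lfill C (LDef f (remove_rule L rho) (map (lsubst sg) us)))
| LStepApply (C : lctx F) (f : F) (L : rule F -> Prop) (rho : rule F)
    (ls : list (term F)) (sg : nat -> lterm F) :
    L rho -> lhs rho = Fun f ls -> lwf_subst R sg ->
    (forall j, j < length (conds rho) ->
       lsteps R (lapp R sg (fst (cnth rho j))) (lapp R sg (snd (cnth rho j)))) ->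
    lstep R (lfill C (LDef f L (map (lapp R sg) ls)))
            (lfill C (lapp R sg (rhs rho)))
| LStepFail (C : lctx F) (f : F) (L : rule F -> Prop) (rho : rule F)
    (ls : list (term F)) (sg : nat -> lterm F) (j : nat) (u : lterm F) (tau : nat -> lterm F) :
    L rho -> lhs rho = Fun f ls -> lwf_subst R sg -> j < length (conds rho) ->
    (forall i, i < j ->
       lsteps R (lapp R sg (fst (cnth rho i))) (lapp R sg (snd (cnth rho i)))) ->
    lin_lnf_fresh R [u] rho -> lwf_subst R tau ->
    lsteps R (lapp R sg (fst (cnth rho j))) (lsubst tau u) ->
    ~ unifiable (erase u) (snd (cnth rho j)) ->
    lstep R (lfill C (LDef f L (map (lapp R sg) ls)))
            (lfill C (LDef f (remove_rule L rho) (map (lapp R sg) ls)))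
with lsteps {F : Type} (R : trs F) : lterm F -> lterm F -> Prop :=
| LRefl s : lsteps R s s
| LTrans s t u : lstep R s t -> lsteps R t u -> lsteps R s u.

(* s ⇀_▷ t  (j is 0-based: t = label(a_{j+1}) sigma) *)
Definition lsup {F : Type} (R : trs F) (s t : lterm F) : Prop :=
  exists (C : lctx F) (f : F) (L : rule F -> Prop) (rho : rule F)
         (ls : list (term F)) (sg : nat -> lterm F) (j : nat),
    L rho /\ lhs rho = Fun f ls /\ lwf_subst R sg /\ j < length (conds rho) /\
    s = lfill C (LDef f L (map (lapp R sg) ls)) /\
    (forall i, i < j ->
       lsteps R (lapp R sg (fst (cnth rho i))) (lapp R sg (snd (cnth rho i)))) /\
    t = lapp R sg (fst (cnth rho j)).

(* Main.v *)
Require Import Defs.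
From Stdlib Require Import List Arith ClassicalEpsilon.
Import ListNotations.

Scheme rstep_ind2 := Induction for rstep Sort Prop
with rsteps_ind2 := Induction for rsteps Sort Prop.
Scheme lstep_ind2 := Induction for lstep Sort Prop
with lsteps_ind2 := Induction for lsteps Sort Prop.

Section Aux.
Variable F : Type.
Variable R : trs F.

Fixpoint term_ind' (P : term F -> Prop) (Hv : forall x, P (Var x))
  (Hf : forall f ts, Forall P ts -> P (Fun f ts)) (t : term F) : P t :=
  match t with
  | Var x => Hv x
  | Fun f ts => Hf f ts ((fix go (ts : list (term F)) : Forall P ts :=
      match ts with [] => Forall_nil _ | t :: ts' => Forall_cons _ (term_ind' P Hv Hf t) (go ts') end) ts)
  end.

Fixpoint lterm_ind' (P : lterm F -> Prop) (Hv : forall x, P (LVar x))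
  (Hc : forall f ts, Forall P ts -> P (LCon f ts))
  (Hd : forall f L ts, Forall P ts -> P (LDef f L ts)) (t : lterm F) : P t :=
  let go := (fix go (ts : list (lterm F)) : Forall P ts :=
      match ts with [] => Forall_nil _ | t :: ts' => Forall_cons _ (lterm_ind' P Hv Hc Hd t) (go ts') end) in
  match t with
  | LVar x => Hv x
  | LCon f ts => Hc f ts (go ts)
  | LDef f L ts => Hd f L ts (go ts)
  end.

Lemma erase_label (t : term F) : erase (label R t) = t.
Proof.
  induction t as [x|f ts IH] using term_ind'; simpl; auto.
  destruct (excluded_middle_informative (defined R f)); simpl; f_equal;
  rewrite map_map; rewrite <- (map_id ts) at 2; apply map_ext_Forall; exact IH.
Qed.

Lemma erase_lsubst (sg : nat -> lterm F) t : erase (lsubst sg t) = subst (fun x => erase (sg x)) (erase t).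
Proof.
  induction t as [x|f ts IH|f L ts IH] using lterm_ind'; simpl; auto;
  f_equal; rewrite !map_map; apply map_ext_Forall; exact IH.
Qed.

Lemma erase_lapp (sg : nat -> lterm F) t : erase (lapp R sg t) = subst (fun x => erase (sg x)) t.
Proof. unfold lapp. rewrite erase_lsubst, erase_label. reflexivity. Qed.

Lemma label_subst (sg : nat -> term F) t : label R (subst sg t) = lsubst (fun x => label R (sg x)) (label R t).
Proof.
  induction t as [x|f ts IH] using term_ind'; simpl; auto.
  destruct (excluded_middle_informative (defined R f)); simpl; f_equal;
  rewrite !map_map; apply map_ext_Forall; exact IH.
Qed.

Lemma lwf_label t : lwf R (label R t).
Proof.
  induction t as [x|f ts IH] using term_ind'; simpl; [constructor|].
  destruct (excluded_middle_informative (defined R f)); constructor; auto;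
  apply Forall_map; exact IH.
Qed.

Lemma lwf_lsubst (sg : nat -> lterm F) t : lwf R t -> lwf_subst R sg -> lwf R (lsubst sg t).
Proof.
  intros H Hs. revert H.
  induction t as [x|f ts IH|f L ts IH] using lterm_ind'; simpl; intro H; auto;
  inversion H; subst; constructor; auto; apply Forall_map;
  rewrite Forall_forall in *; auto.
Qed.

Lemma lwf_lapp (sg : nat -> lterm F) t : lwf_subst R sg -> lwf R (lapp R sg t).
Proof. intro; apply lwf_lsubst; auto; apply lwf_label. Qed.

Fixpoint label_ctx (C : ctx F) : lctx F :=
  match C with
  | Hole => LHole
  | CFun f l C r => if excluded_middle_informative (defined R f)
      then LCDef f (rules_of R f) (map (label R) l) (label_ctx C) (map (label R) r)
      else LCCon f (map (label R) l) (label_ctx C) (map (label R) r)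
  end.

Lemma label_fill C t : label R (fill C t) = lfill (label_ctx C) (label R t).
Proof.
  induction C; simpl; auto.
  destruct (excluded_middle_informative (defined R f)); simpl;
  rewrite map_app; simpl; rewrite IHC; reflexivity.
Qed.

Fixpoint erase_ctx (C : lctx F) : ctx F :=
  match C with
  | LHole => Hole
  | LCCon f l C r => CFun f (map erase l) (erase_ctx C) (map erase r)
  | LCDef f _ l C r => CFun f (map erase l) (erase_ctx C) (map erase r)
  end.

Lemma erase_lfill C t : erase (lfill C t) = fill (erase_ctx C) (erase t).
Proof.
  induction C; simpl; auto; rewrite map_app; simpl; rewrite IHC; reflexivity.
Qed.

Lemma lwf_lfill C t t' : lwf R (lfill C t) -> lwf R t /\ (lwf R t' -> lwf R (lfill C t')).
Proof.
  induction C; simpl; intro H; [split; auto| |].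
  - inversion H as [|? ? Hd Hf|]; subst.
    apply Forall_app in Hf as [H5 H6]; inversion H6 as [|? ? H7 H8]; subst.
    destruct (IHC H7) as [A B]; split; auto; intro; constructor; auto;
    apply Forall_app; split; auto.
  - inversion H as [| |? ? ? Hd Hs Hf]; subst.
    apply Forall_app in Hf as [H5 H6]; inversion H6 as [|? ? H7 H8]; subst.
    destruct (IHC H7) as [A B]; split; auto; intro; constructor; auto;
    apply Forall_app; split; auto.
Qed.

Lemma label_Fun_def f ts : defined R f -> label R (Fun f ts) = LDef f (rules_of R f) (map (label R) ts).
Proof. intro H; simpl; destruct (excluded_middle_informative (defined R f)); tauto. Qed.

Lemma rsteps_trans s t u : rsteps R s t -> rsteps R t u -> rsteps R s u.
Proof. induction 1; intros; auto. eapply RTrans; eauto. Qed.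

Lemma rstep_intro C rho sg s t : R rho ->
  (forall c, In c (conds rho) -> rsteps R (subst sg (fst c)) (subst sg (snd c))) ->
  s = fill C (subst sg (lhs rho)) -> t = fill C (subst sg (rhs rho)) -> rstep R s t.
Proof. intros; subst; constructor; auto. Qed.



Lemma lwf_remove f L rho C ts : lwf R (lfill C (LDef f L ts)) ->
  lwf R (lfill C (LDef f (remove_rule L rho) ts)).
Proof.
  intro H. destruct (lwf_lfill C (LDef f L ts) (LDef f (remove_rule L rho) ts) H) as [A B].
  apply B. inversion A; subst. constructor; auto. intros r [Hr _]; auto.
Qed.

Lemma apply_case C f L rho ls sg : L rho -> lhs rho = Fun f ls -> lwf_subst R sg ->
  (forall j : nat, j < length (conds rho) ->
   lsteps R (lapp R sg (fst (cnth rho j))) (lapp R sg (snd (cnth rho j)))) ->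
  (forall j : nat, j < length (conds rho) ->
   lwf R (lapp R sg (fst (cnth rho j))) ->
   rsteps R (erase (lapp R sg (fst (cnth rho j))))
     (erase (lapp R sg (snd (cnth rho j)))) /\
   lwf R (lapp R sg (snd (cnth rho j)))) ->
  lwf R (lfill C (LDef f L (map (lapp R sg) ls))) ->
  rsteps R (erase (lfill C (LDef f L (map (lapp R sg) ls))))
    (erase (lfill C (lapp R sg (rhs rho)))) /\
  lwf R (lfill C (lapp R sg (rhs rho))).
Proof.
  intros HL Hl Hsg Hc IH Hs;
    destruct (lwf_lfill C _ (lapp R sg (rhs rho)) Hs) as [A B];
    split; [|apply B, lwf_lapp; auto].
  inversion A as [| |? ? ? Hd Hsub Hf]; subst.
  destruct (Hsub rho HL) as [HR _].
  eapply RTrans; [|constructor].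
  apply (rstep_intro (erase_ctx C) rho (fun x => erase (sg x))); auto.
  - intros c Hin. destruct (In_nth _ _ (Var 0, Var 0) Hin) as [j [Hj Hjc]].
    destruct (IH j Hj) as [X _]; [apply lwf_lapp; auto|].
    rewrite !erase_lapp in X. unfold cnth in X. rewrite Hjc in X. exact X.
  - rewrite erase_lfill, Hl. simpl. rewrite map_map. f_equal. f_equal.
    apply map_ext. intro; apply erase_lapp.
  - rewrite erase_lfill, erase_lapp. reflexivity.
Qed.

Lemma sound_both :
  (forall s t, lstep R s t -> lwf R s -> rsteps R (erase s) (erase t) /\ lwf R t) /\
  (forall s t, lsteps R s t -> lwf R s -> rsteps R (erase s) (erase t) /\ lwf R t).
Proof.
  set (P := fun s t => lwf R s -> rsteps R (erase s) (erase t) /\ lwf R t).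
  cut ((forall s t (H : lstep R s t), P s t) /\ (forall s t (H : lsteps R s t), P s t)).
  { intros [A B]; split; [exact A|exact B]. }
  split; [apply (lstep_ind2 F R (fun s t _ => P s t) (fun s t _ => P s t))
        | apply (lsteps_ind2 F R (fun s t _ => P s t) (fun s t _ => P s t))].
  all: unfold P; clear P.
  all: try (intros; split; [rewrite !erase_lfill; simpl; constructor | apply lwf_remove; auto]; fail).
  all: try (intros; split; [constructor|auto]; fail).
  all: try (intros s t u _ IH1 _ IH2 Hs; destruct (IH1 Hs) as [A B]; destruct (IH2 B) as [C D];
            split; auto; eapply rsteps_trans; eauto; fail).
  all: intros; eapply apply_case; eauto.
Qed.

Lemma lhs_fun (HC : CCTRS R) rho : R rho -> exists f ls, lhs rho = Fun f ls.
Proof. intro H. destruct (HC rho H) as [f [ls [E _]]]. eauto. Qed.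

Lemma complete_both (HC : CCTRS R) :
  (forall s t, rstep R s t -> lstep R (label R s) (label R t)) /\
  (forall s t, rsteps R s t -> lsteps R (label R s) (label R t)).
Proof.
  split; [apply (rstep_ind2 F R (fun s t _ => lstep R (label R s) (label R t))
                   (fun s t _ => lsteps R (label R s) (label R t)))
        | apply (rsteps_ind2 F R (fun s t _ => lstep R (label R s) (label R t))
                   (fun s t _ => lsteps R (label R s) (label R t)))].
  all: try (intros; constructor; fail).
  all: try (intros; econstructor; eauto; fail).
  all: intros C rho sg HR Hc IH.
  all: destruct (lhs_fun HC rho HR) as [f [ls Hl]].
  all: assert (Hd : defined R f) by (exists rho; split; auto; rewrite Hl; eexists; eauto).
  all: rewrite !label_fill, Hl; simpl subst; rewrite label_Fun_def by auto;
       rewrite (label_subst sg (rhs rho)).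
  all: replace (map (label R) (map (subst sg) ls)) with
         (map (lapp R (fun x => label R (sg x))) ls)
       by (rewrite map_map; apply map_ext; intro; unfold lapp; rewrite label_subst; auto).
  all: apply (@LStepApply F R (label_ctx C) f (rules_of R f) rho ls); auto.
  all: try (split; auto; rewrite Hl; eexists; eauto).
  all: try (intro; apply lwf_label).
  all: intros j Hj; unfold lapp; rewrite <- !label_subst; apply IH; unfold cnth; apply nth_In; auto.
Qed.
End Aux.

Theorem lemma4 (F : Type) (R : trs F) :
  CCTRS R ->
  (forall s t : term F, sqsup R s t -> lsup R (label R s) (label R t)) /\
  (forall s t : lterm F, lwf R s -> lwf R t -> lsup R s t -> sqsup R (erase s) (erase t)).
Proof.
  intro HC. split.
  - intros s t [C [rho [sg [i [HR [Hs [Hi [Hpre Ht]]]]]]]].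
    destruct (lhs_fun F R HC rho HR) as [f [ls Hl]].
    assert (Hd : defined R f) by (exists rho; split; auto; rewrite Hl; eexists; eauto).
    exists (label_ctx F R C), f, (rules_of R f), rho, ls, (fun x => label R (sg x)), i.
    split; [split; auto; rewrite Hl; eexists; eauto|].
    split; [auto|]. split; [intro; apply lwf_label|]. split; [auto|].
    split; [|split].
    + subst s. rewrite label_fill, Hl. simpl subst. rewrite label_Fun_def by auto.
      f_equal. f_equal. rewrite map_map; apply map_ext; intro; unfold lapp; rewrite label_subst; auto.
    + intros j Hj. unfold lapp; rewrite <- !label_subst. apply (proj2 (complete_both F R HC)). auto.
    + subst t. unfold lapp; rewrite label_subst; auto.
  - intros s t Hs _ [C [f [L [rho [ls [sg [j [HL [Hl [Hsg [Hj [Es [Hpre Et]]]]]]]]]]]]].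
    subst s.
    destruct (lwf_lfill F R C _ (LVar 0) Hs) as [A _].
    inversion A as [| |? ? ? Hd Hsub Hf]; subst.
    destruct (Hsub rho HL) as [HR _].
    exists (erase_ctx F C), rho, (fun x => erase (sg x)), j.
    split; auto. split; [|split; auto; split].
    + rewrite erase_lfill, Hl. simpl. rewrite map_map. f_equal. f_equal.
      apply map_ext. intro; apply erase_lapp.
    + intros i Hi. rewrite <- !(erase_lapp F R). apply (proj2 (sound_both F R)).
      * apply Hpre; auto.
      * apply lwf_lapp; auto.
    + apply erase_lapp.
Qed.
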